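(* Let $d\ge2$, let $\Delta^d$ be the probability simplex in $\mathbb{R}^d$, and let $\pi\in\Delta^d$ have all coordinates positive. Let $\mathcal{A}$ be a coin-betting algorithm that, given past coin outcomes $c'_1,\dots,c'_{t-1}$, outputs a bet $x_t\in\mathbb{R}$, and suppose that for some function $f_T:\mathbb{R}\to\mathbb{R}$ it guarantees, for every sequence $c'_1,\dots,c'_T\in[-1,1]$ (where $c'_t$ may depend on $x_1,\dots,x_t$), $1+\sum_{t=1}^Tc'_tx_t\ge\exp\big(f_T(\sum_{t=1}^Tc'_t)\big)$. Run $d$ copies of $\mathcal{A}$; at round $t$ let $x_{t,i}$ be the bet of copy $i$, set $\hat p_{t,i}=\pi_i\max(x_{t,i},0)$, predict $p_t=\hat p_t/\|\hat p_t\|_1$ if $\hat p_t\ne0$ and $p_t=\pi$ otherwise, receive $g_t\in[0,1]^d$, and feed copy $i$ the coin outcome $c_{t,i}=\langle g_t,p_t\rangle-g_{t,i}$ if $x_{t,i}>0$ and $c_{t,i}=\max(\langle g_t,p_t\rangle-g_{t,i},0)$ if $x_{t,i}\le0$. Then for every concave non-decreasing $h:\mathbb{R}\to\mathbb{R}$ satisfying $x\le h(f_T(x))$ for all $x\in[-T,T]$, and every $u\in\Delta^d$, \[ \sum_{t=1}^T\langle g_t,p_t-u\rangle\le h\big(\mathrm{KL}(u;\pi)\big). \]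
   Context: $\mathrm{KL}(u;\pi)=\sum_{i=1}^du_i\ln\frac{u_i}{\pi_i}$ with the convention $0\ln0=0$. *)

(* Defs.v *)
From Stdlib Require Import Reals List.
Import ListNotations.
Open Scope R_scope.

Fixpoint sumR (n : nat) (f : nat -> R) : R :=
  match n with O => 0 | S m => sumR m f + f m end.

(* vectors in R^d are functions nat -> R, coordinates 0..d-1 *)
Definition in_simplex (d : nat) (u : nat -> R) : Prop :=
  (forall i, (i < d)%nat -> 0 <= u i) /\ sumR d u = 1.

Definition KL (d : nat) (u pi : nat -> R) : R :=
  sumR d (fun i => if Req_EM_T (u i) 0 then 0 else u i * ln (u i / pi i)).

(* A coin-betting algorithm maps the list of past coin outcomes
   [c_1; ...; c_{t-1}] to the bet x_t. *)
Definition betting_algo := list R -> R.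

Definition wealth_guarantee (A : betting_algo) (T : nat) (fT : R -> R) : Prop :=
  forall c : nat -> R,
    (forall t, (1 <= t <= T)%nat -> -1 <= c t <= 1) ->
    1 + sumR T (fun k => c (S k) * A (map c (seq 1 k)))
      >= exp (fT (sumR T (fun k => c (S k)))).

(* Reduction. H i = history of coin outcomes fed so far to copy i. *)
Definition phat (pi : nat -> R) (A : betting_algo) (H : nat -> list R) (i : nat) : R :=
  pi i * Rmax (A (H i)) 0.

Definition pred (d : nat) (pi : nat -> R) (A : betting_algo) (H : nat -> list R)
  (i : nat) : R :=
  let s := sumR d (fun j => Rabs (phat pi A H j)) in
  if Req_EM_T s 0 then pi i else phat pi A H i / s.

Definition coin (d : nat) (pi : nat -> R) (A : betting_algo) (H : nat -> list R)
  (gt : nat -> R) (i : nat) : R :=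
  let gp := sumR d (fun j => gt j * pred d pi A H j) in
  if Rlt_dec 0 (A (H i)) then gp - gt i else Rmax (gp - gt i) 0.

(* hist t = histories of all copies after rounds 1..t; g t = gain vector at round t *)
Fixpoint hist (d : nat) (pi : nat -> R) (A : betting_algo) (g : nat -> nat -> R)
  (t : nat) : nat -> list R :=
  match t with
  | O => fun _ => []
  | S t' => fun i => hist d pi A g t' i ++ [coin d pi A (hist d pi A g t') (g (S t')) i]
  end.

(* prediction p_t at round t >= 1 *)
Definition p_round (d : nat) (pi : nat -> R) (A : betting_algo) (g : nat -> nat -> R)
  (t : nat) : nat -> R :=
  pred d pi A (hist d pi A g (Nat.pred t)).

Definition concave (h : R -> R) : Prop :=
  forall x y l, 0 <= l <= 1 -> l * h x + (1 - l) * h y <= h (l * x + (1 - l) * y).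

Definition nondecreasing (h : R -> R) : Prop :=
  forall x y, x <= y -> h x <= h y.

(* Main.v *)
Require Import Defs.
From Stdlib Require Import Reals List Lra Lia.
Open Scope R_scope.

Lemma Rdiv_le_0_compat a b : 0 <= a -> 0 < b -> 0 <= a / b.
Proof. intros; unfold Rdiv; apply Rmult_le_pos; auto; apply Rlt_le, Rinv_0_lt_compat; auto. Qed.
Lemma Rdiv_lt_0_compat' a b : 0 < a -> 0 < b -> 0 < a / b.
Proof. intros; unfold Rdiv; apply Rmult_lt_0_compat; auto; apply Rinv_0_lt_compat; auto. Qed.

Lemma sumR_ext n f g : (forall i, (i < n)%nat -> f i = g i) -> sumR n f = sumR n g.
Proof. induction n; simpl; intros H; auto. rewrite IHn by (intros; apply H; lia). rewrite H by lia. auto. Qed.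

Lemma sumR_le n f g : (forall i, (i < n)%nat -> f i <= g i) -> sumR n f <= sumR n g.
Proof. induction n; simpl; intros H; try lra. assert (H1 := H n ltac:(lia)). assert (sumR n f <= sumR n g) by (apply IHn; intros; apply H; lia). lra. Qed.

Lemma sumR_plus n f g : sumR n (fun i => f i + g i) = sumR n f + sumR n g.
Proof. induction n; simpl; lra. Qed.

Lemma sumR_minus n f g : sumR n (fun i => f i - g i) = sumR n f - sumR n g.
Proof. induction n; simpl; lra. Qed.

Lemma sumR_scal n c f : sumR n (fun i => c * f i) = c * sumR n f.
Proof. induction n; simpl; lra. Qed.

Lemma sumR_swap n m (f : nat -> nat -> R) :
  sumR n (fun i => sumR m (f i)) = sumR m (fun k => sumR n (fun i => f i k)).
Proof. induction n; simpl.
- induction m; simpl; lra.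
- rewrite IHn. rewrite <- sumR_plus. reflexivity. Qed.

Lemma sumR_nonneg n f : (forall i, (i < n)%nat -> 0 <= f i) -> 0 <= sumR n f.
Proof. intros H. apply Rle_trans with (sumR n (fun _ => 0)).
  - clear H; induction n; simpl; lra.
  - apply sumR_le; auto. Qed.

Lemma sumR_zero n f : (forall i, (i < n)%nat -> 0 <= f i) -> sumR n f = 0 ->
  forall i, (i < n)%nat -> f i = 0.
Proof. induction n; simpl; intros H S i Hi; try lia.
  assert (0 <= sumR n f) by (apply sumR_nonneg; intros; apply H; lia).
  assert (0 <= f n) by (apply H; lia).
  destruct (Nat.eq_dec i n).
  - subst; lra.
  - apply IHn; try lia; try lra. intros; apply H; lia. Qed.

Lemma sumR_bound n f : (forall i, (i < n)%nat -> -1 <= f i <= 1) ->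
  - INR n <= sumR n f <= INR n.
Proof. induction n; intros H; [simpl; lra|]. simpl sumR.
  assert (- INR n <= sumR n f <= INR n) by (apply IHn; intros; apply H; lia).
  assert (-1 <= f n <= 1) by (apply H; lia). rewrite S_INR. lra. Qed.

Lemma jensen (h : R -> R) : concave h -> forall n w y,
  (forall i, (i < n)%nat -> 0 <= w i) -> sumR n w = 1 ->
  sumR n (fun i => w i * h (y i)) <= h (sumR n (fun i => w i * y i)).
Proof. intros Hc n; induction n; intros w y Hw S; simpl in *; try lra.
  assert (Hs : 0 <= sumR n w) by (apply sumR_nonneg; intros; apply Hw; lia).
  destruct (Req_dec (w n) 1) as [E|E].
  - assert (Z : forall i, (i < n)%nat -> w i = 0).
    { apply sumR_zero; [intros; apply Hw; lia | lra]. }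
    rewrite (sumR_ext n (fun i => w i * h (y i)) (fun _ => 0 * 0)) by (intros i Hi; rewrite (Z i Hi); ring).
    rewrite (sumR_ext n (fun i => w i * y i) (fun _ => 0 * 0)) by (intros i Hi; rewrite (Z i Hi); ring).
    rewrite !sumR_scal, E, !Rmult_0_l, !Rplus_0_l, !Rmult_1_l; lra.
  - assert (Hwn : 0 <= w n) by (apply Hw; lia).
    set (w' := fun i => w i / (1 - w n)).
    assert (IH := IHn w' y).
    assert (IH' : sumR n (fun i => w' i * h (y i)) <= h (sumR n (fun i => w' i * y i))).
    { apply IH. intros i Hi. unfold w'. apply Rdiv_le_0_compat; [apply Hw; lia | lra].
      unfold w'. rewrite (sumR_ext n _ (fun i => / (1 - w n) * w i)) by (intros; unfold Rdiv; ring).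
      rewrite sumR_scal. replace (sumR n w) with (1 - w n) by lra. field; lra. }
    assert (E1 : sumR n (fun i => w i * h (y i)) = (1 - w n) * sumR n (fun i => w' i * h (y i))).
    { rewrite <- sumR_scal. apply sumR_ext; intros; unfold w'; field; lra. }
    assert (E2 : sumR n (fun i => w i * y i) = (1 - w n) * sumR n (fun i => w' i * y i)).
    { rewrite <- sumR_scal. apply sumR_ext; intros; unfold w'; field; lra. }
    rewrite E1, E2.
    assert (C := Hc (sumR n (fun i => w' i * y i)) (y n) (1 - w n) ltac:(lra)).
    replace (1 - (1 - w n)) with (w n) in C by lra.
    apply Rle_trans with ((1 - w n) * h (sumR n (fun i => w' i * y i)) + w n * h (y n)); [|lra].
    apply Rplus_le_compat_r. apply Rmult_le_compat_l; lra.
Qed.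

Definition gpf d pi A H (gt : nat -> R) := sumR d (fun j => gt j * pred d pi A H j).
Definition sf d pi A H := sumR d (fun j => Rabs (phat pi A H j)).

Lemma coin_eq d pi A H gt i : coin d pi A H gt i =
  if Rlt_dec 0 (A (H i)) then gpf d pi A H gt - gt i else Rmax (gpf d pi A H gt - gt i) 0.
Proof. reflexivity. Qed.

Lemma pred_eq d pi A H i : pred d pi A H i =
  if Req_EM_T (sf d pi A H) 0 then pi i else phat pi A H i / sf d pi A H.
Proof. reflexivity. Qed.

Lemma phat_nonneg pi A H i : 0 <= pi i -> 0 <= phat pi A H i.
Proof. intros; unfold phat. apply Rmult_le_pos; auto. apply Rmax_r. Qed.

Lemma sf_eq d pi A H : (forall i, (i < d)%nat -> 0 <= pi i) ->
  sf d pi A H = sumR d (phat pi A H).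
Proof. intros; unfold sf; apply sumR_ext; intros; apply Rabs_pos_eq, phat_nonneg; auto. Qed.

Lemma round_le0 d pi A H gt : (forall i, (i < d)%nat -> 0 <= pi i) ->
  sumR d (fun i => pi i * (coin d pi A H gt i * A (H i))) <= 0.
Proof. intros Hpi.
  apply Rle_trans with (sumR d (fun i => phat pi A H i * (gpf d pi A H gt - gt i))).
  - apply sumR_le; intros i Hi. rewrite coin_eq. unfold phat.
    destruct (Rlt_dec 0 (A (H i))).
    + rewrite (Rmax_left (A (H i)) 0) by lra. right; ring.
    + rewrite (Rmax_right (A (H i)) 0) by lra. assert (0 <= pi i) by auto.
      assert (0 <= Rmax (gpf d pi A H gt - gt i) 0) by apply Rmax_r.
      assert (0 <= pi i * Rmax (gpf d pi A H gt - gt i) 0) by (apply Rmult_le_pos; auto).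
      nra.
  - rewrite (sumR_ext d _ (fun i => gpf d pi A H gt * phat pi A H i - gt i * phat pi A H i))
      by (intros; ring).
    rewrite sumR_minus, sumR_scal.
    assert (Es := sf_eq d pi A H Hpi).
    unfold gpf at 1.
    destruct (Req_EM_T (sf d pi A H) 0) as [Z|Z].
    + assert (Z' : forall i, (i < d)%nat -> phat pi A H i = 0).
      { apply sumR_zero; [intros; apply phat_nonneg; auto | lra]. }
      rewrite (sumR_ext d (fun i => gt i * phat pi A H i) (fun i => 0 * gt i))
        by (intros i Hi; rewrite (Z' i Hi); ring).
      rewrite sumR_scal. rewrite <- Es, Z. lra.
    + rewrite (sumR_ext d (fun j => gt j * pred d pi A H j)
         (fun j => / sf d pi A H * (gt j * phat pi A H j))).
      * rewrite sumR_scal. rewrite <- Es. field_simplify; [lra | auto].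
      * intros j Hj. rewrite pred_eq. destruct (Req_EM_T (sf d pi A H) 0); [contradiction|].
        unfold Rdiv; ring.
Qed.

Lemma pred_simplex d pi A H : in_simplex d pi -> in_simplex d (pred d pi A H).
Proof. intros [Hp Hs]. split.
  - intros i Hi. rewrite pred_eq. destruct (Req_EM_T _ 0); auto.
    apply Rdiv_le_0_compat; [apply phat_nonneg; auto|].
    assert (0 <= sf d pi A H) by (unfold sf; apply sumR_nonneg; intros; apply Rabs_pos). lra.
  - destruct (Req_EM_T (sf d pi A H) 0) as [Z|Z].
    + rewrite (sumR_ext d _ pi); auto. intros; rewrite pred_eq.
      destruct (Req_EM_T _ 0); [auto|contradiction].
    + rewrite (sumR_ext d _ (fun j => / sf d pi A H * phat pi A H j)).
      * rewrite sumR_scal, <- sf_eq by auto. field; auto.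
      * intros; rewrite pred_eq. destruct (Req_EM_T _ 0); [contradiction|]. unfold Rdiv; ring.
Qed.

Lemma gp_bounds d (gt p : nat -> R) : (forall j, (j < d)%nat -> 0 <= gt j <= 1) ->
  in_simplex d p -> 0 <= sumR d (fun j => gt j * p j) <= 1.
Proof. intros Hg [Hp Hs]. split.
  - apply sumR_nonneg; intros j Hj. apply Rmult_le_pos; [apply Hg; auto| auto].
  - rewrite <- Hs. apply sumR_le; intros j Hj. assert (H1 := Hg j Hj). assert (H2 := Hp j Hj). nra.
Qed.

Definition cseq d pi A g i : nat -> R :=
  fun t => coin d pi A (hist d pi A g (Nat.pred t)) (g t) i.

Lemma hist_map d pi A g i k : hist d pi A g k i = map (cseq d pi A g i) (seq 1 k).
Proof. induction k; [reflexivity|]. cbn [hist]. rewrite IHk, seq_S, map_app. reflexivity. Qed.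

Theorem mainTheorem19 (d : nat) (pi : nat -> R) (A : betting_algo) (T : nat)
  (fT : R -> R) (g : nat -> nat -> R) (h : R -> R) (u : nat -> R) :
  (2 <= d)%nat ->
  in_simplex d pi ->
  (forall i, (i < d)%nat -> 0 < pi i) ->
  wealth_guarantee A T fT ->
  (forall t i, (1 <= t <= T)%nat -> (i < d)%nat -> 0 <= g t i <= 1) ->
  concave h ->
  nondecreasing h ->
  (forall x, - INR T <= x <= INR T -> x <= h (fT x)) ->
  in_simplex d u ->
  sumR T (fun k => sumR d (fun i => g (S k) i * (p_round d pi A g (S k) i - u i)))
    <= h (KL d u pi).
Proof.
  intros Hd Hpis Hpi Hwg Hg Hc Hm Hh Hus.
  assert (Hpi0 : forall i, (i < d)%nat -> 0 <= pi i) by (intros; apply Rlt_le; auto).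
  destruct Hus as [Hu0 Hu1].
  set (c := fun i => cseq d pi A g i).
  set (G := fun i => sumR T (fun k => c i (S k))).
  set (W := fun i => 1 + sumR T (fun k => c i (S k) * A (hist d pi A g k i))).
  assert (Hcb : forall i t, (i < d)%nat -> (1 <= t <= T)%nat -> -1 <= c i t <= 1).
  { intros i t Hi Ht. unfold c, cseq. rewrite coin_eq.
    assert (Hgp := gp_bounds d (g t) _ (fun j Hj => Hg t j Ht Hj)
                     (pred_simplex d pi A (hist d pi A g (Nat.pred t)) Hpis)).
    fold (gpf d pi A (hist d pi A g (Nat.pred t)) (g t)) in Hgp.
    assert (Hgi := Hg t i Ht Hi).
    destruct (Rlt_dec _ _); [lra|].
    unfold Rmax; destruct (Rle_dec _ _); lra. }
  assert (HW : forall i, (i < d)%nat -> W i >= exp (fT (G i))).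
  { intros i Hi. unfold W, G.
    assert (X := Hwg (c i) (fun t Ht => Hcb i t Hi Ht)).
    rewrite (sumR_ext T (fun k => c i (S k) * A (hist d pi A g k i))
               (fun k => c i (S k) * A (map (c i) (seq 1 k)))); auto.
    intros; unfold c; rewrite hist_map; auto. }
  assert (HWpos : forall i, (i < d)%nat -> 0 < W i).
  { intros i Hi. assert (X := HW i Hi). assert (Y := exp_pos (fT (G i))). lra. }
  assert (HfW : forall i, (i < d)%nat -> fT (G i) <= ln (W i)).
  { intros i Hi. destruct (Rle_dec (fT (G i)) (ln (W i))) as [|n]; auto.
    exfalso. assert (X := HW i Hi). assert (ln (W i) < fT (G i)) by lra.
    assert (Y := exp_increasing _ _ H). rewrite exp_ln in Y by auto. lra. }
  assert (HpiW : sumR d (fun i => pi i * W i) <= 1).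
  { unfold W.
    rewrite (sumR_ext d _ (fun i => pi i + sumR T (fun k => pi i * (c i (S k) * A (hist d pi A g k i)))))
      by (intros; rewrite sumR_scal; ring).
    rewrite sumR_plus, sumR_swap. destruct Hpis as [_ Hs1]. rewrite Hs1.
    assert (sumR T (fun k => sumR d (fun i => pi i * (c i (S k) * A (hist d pi A g k i)))) <= sumR T (fun _ => 0)).
    { apply sumR_le; intros k Hk. unfold c, cseq. simpl Nat.pred. apply round_le0; auto. }
    assert (sumR T (fun _ : nat => 0) = 0) by (clear; induction T; simpl; lra). lra. }
  apply Rle_trans with (sumR d (fun i => u i * G i)).
  { unfold G. rewrite (sumR_ext d (fun i => u i * sumR T (fun k => c i (S k)))
                        (fun i => sumR T (fun k => u i * c i (S k)))) by (intros; rewrite sumR_scal; auto).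
    rewrite (sumR_swap d T). apply sumR_le; intros k Hk.
    unfold p_round. simpl Nat.pred.
    set (p := pred d pi A (hist d pi A g k)).
    rewrite (sumR_ext d _ (fun i => g (S k) i * p i - g (S k) i * u i)) by (intros; ring).
    rewrite sumR_minus.
    set (gp := sumR d (fun i => g (S k) i * p i)).
    replace (gp - sumR d (fun i => g (S k) i * u i)) with (sumR d (fun i => u i * (gp - g (S k) i))).
    2:{ rewrite (sumR_ext d _ (fun i => gp * u i - g (S k) i * u i)) by (intros; ring).
        rewrite sumR_minus, sumR_scal, Hu1. ring. }
    apply sumR_le; intros i Hi. apply Rmult_le_compat_l; auto.
    unfold c, cseq. simpl Nat.pred. rewrite coin_eq. fold p.
    unfold gpf. fold p. fold gp.
    destruct (Rlt_dec _ _); [lra| apply Rmax_l]. }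
  apply Rle_trans with (sumR d (fun i => u i * h (fT (G i)))).
  { apply sumR_le; intros i Hi. apply Rmult_le_compat_l; auto. apply Hh.
    unfold G. apply sumR_bound. intros k Hk. apply Hcb; auto; lia. }
  apply Rle_trans with (h (sumR d (fun i => u i * fT (G i)))).
  { apply (jensen h Hc d u (fun i => fT (G i))); auto. }
  apply Hm.
  apply Rle_trans with (sumR d (fun i => u i * ln (W i))).
  { apply sumR_le; intros i Hi. apply Rmult_le_compat_l; auto. }
  apply Rle_trans with (KL d u pi + (sumR d (fun i => pi i * W i) - sumR d u)); [|lra].
  unfold KL. rewrite <- sumR_minus, <- sumR_plus. apply sumR_le; intros i Hi.
  assert (Hpii := Hpi i Hi). assert (Hwi := HWpos i Hi). assert (Hui := Hu0 i Hi).
  destruct (Req_EM_T (u i) 0) as [Z|Z].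
  - rewrite Z. assert (0 < pi i * W i) by (apply Rmult_lt_0_compat; auto). lra.
  - assert (Hup : 0 < u i) by lra.
    replace (ln (W i)) with (ln (u i / pi i) + ln (pi i * W i / u i)).
    2:{ rewrite <- ln_mult. f_equal. field. split; lra.
        apply Rdiv_lt_0_compat'; auto. apply Rdiv_lt_0_compat'; auto. apply Rmult_lt_0_compat; auto. }
    assert (L := exp_ineq1_le (ln (pi i * W i / u i))).
    rewrite exp_ln in L by (apply Rdiv_lt_0_compat'; auto; apply Rmult_lt_0_compat; auto).
    assert (u i * ln (pi i * W i / u i) <= u i * (pi i * W i / u i - 1)) by (apply Rmult_le_compat_l; lra).
    replace (u i * (pi i * W i / u i - 1)) with (pi i * W i - u i) in H by (field; lra).
    lra.
Qed.
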